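(* Let $d\ge2$ and let $G$ be a closed convex germ with $\overline{\mathrm{conv}}(\Delta_{\rm e}\cup B_{\rm i})\subseteq G$. If $G$ is not a qplex, then there are uncountably many distinct qplexes containing $G$.
   Context: Fix an integer $d\ge 2$. $\langle\cdot,\cdot\rangle$ is the standard inner product on $\mathbb{R}^{d^2}$, $\|\cdot\|$ the Euclidean norm. $\Delta=\{p\in\mathbb{R}^{d^2}: p(i)\ge0,\ \sum_ip(i)=1\}$; $H=\{u\in\mathbb{R}^{d^2}:\sum_i u(i)=1\}$; $c=(1/d^2,\dots,1/d^2)$. $\overline{\mathrm{conv}}(X)$ denotes the closed convex hull. For $A\subseteq H$ the polar is $A^*=\{u\in H:\langle u,v\rangle\ge\frac{1}{d(d+1)}\ \forall v\in A\}$. Out-ball: $B_{\rm o}=\{u\in H:\|u-c\|\le r_{\rm o}\}$, $r_{\rm o}^2=\frac{d-1}{d^2(d+1)}$. In-ball: $B_{\rm i}=\{u\in H:\|u-c\|\le r_{\rm i}\}$, $r_{\rm i}^2=\frac{1}{d^2(d^2-1)}$. Basis distributions: $e_k(i)=\frac{1}{d+1}(\delta_{ki}+\frac1d)$; basis simplex $\Delta_{\rm e}=\mathrm{conv}\{e_1,\dots,e_{d^2}\}$. A subset $A\subseteq\Delta$ is a germ if $\frac{1}{d(d+1)}\le\langle p,s\rangle\le\frac{2}{d(d+1)}$ for all $p,s\in A$. A qplex is a set $Q\subseteq\Delta\cap B_{\rm o}$ with $Q^*=Q$. *)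

(* Defs.v *)
From Stdlib Require Import Reals.
From mathcomp Require Import all_boot.
Set Implicit Arguments. Unset Strict Implicit.

Local Open Scope R_scope.

Definition vec (d : nat) : Type := 'I_(d * d) -> R.

Definition vset (d : nat) : Type := vec d -> Prop.

Definition rsum (d : nat) (f : 'I_(d * d) -> R) : R :=
  \big[Rplus/0]_(i < d * d) f i.

Definition inner (d : nat) (u v : vec d) : R := rsum (fun i => u i * v i).
Definition vnorm (d : nat) (u : vec d) : R := sqrt (inner u u).
Definition vsub (d : nat) (u v : vec d) : vec d := fun i => u i - v i.

Definition Delta (d : nat) : vset d :=
  fun p => (forall i, 0 <= p i) /\ rsum p = 1.
Definition Hplane (d : nat) : vset d := fun u => rsum u = 1.
Definition cen (d : nat) : vec d := fun _ => 1 / (INR d ^ 2).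

Definition qconst (d : nat) : R := 1 / (INR d * (INR d + 1)).

Definition polar (d : nat) (A : vset d) : vset d :=
  fun u => Hplane u /\ forall v, A v -> qconst d <= inner u v.

Definition r_out (d : nat) : R :=
  sqrt ((INR d - 1) / (INR d ^ 2 * (INR d + 1))).
Definition r_in (d : nat) : R :=
  sqrt (1 / (INR d ^ 2 * (INR d ^ 2 - 1))).

Definition Bout (d : nat) : vset d :=
  fun u => Hplane u /\ vnorm (vsub u (@cen d)) <= r_out d.
Definition Bin (d : nat) : vset d :=
  fun u => Hplane u /\ vnorm (vsub u (@cen d)) <= r_in d.

Definition ebasis (d : nat) (k : 'I_(d * d)) : vec d :=
  fun i => (1 / (INR d + 1)) * ((if k == i then 1 else 0) + 1 / INR d).

Definition Delta_e (d : nat) : vset d :=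
  fun u => exists lam : 'I_(d * d) -> R,
    (forall k, 0 <= lam k) /\ rsum lam = 1 /\
    forall i, u i = rsum (fun k => lam k * ebasis k i).

Definition vconvex (d : nat) (S : vset d) : Prop :=
  forall u v (t : R), S u -> S v -> 0 <= t <= 1 ->
    S (fun i => t * u i + (1 - t) * v i).

Definition vclosed (d : nat) (S : vset d) : Prop :=
  forall u, (forall eps, 0 < eps -> exists v, S v /\ vnorm (vsub u v) < eps) ->
    S u.

Definition cl_conv (d : nat) (X : vset d) : vset d :=
  fun u => forall S : vset d, vclosed S -> vconvex S ->
    (forall v, X v -> S v) -> S u.

Definition vunion (d : nat) (A B : vset d) : vset d := fun u => A u \/ B u.
Definition vsubset (d : nat) (A B : vset d) : Prop := forall u, A u -> B u.
Definition vseteq (d : nat) (A B : vset d) : Prop := forall u, A u <-> B u.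

Definition germ (d : nat) (A : vset d) : Prop :=
  vsubset A (@Delta d) /\
  forall p s, A p -> A s ->
    qconst d <= inner p s /\ inner p s <= 2 * qconst d.

Definition qplex (d : nat) (Q : vset d) : Prop :=
  (forall u, Q u -> Delta u /\ Bout u) /\ vseteq (polar Q) Q.

(* "uncountably many" distinct sets with property P: no sequence of sets
   enumerates them all (up to set equality). *)
Definition uncountably_many (d : nat) (P : vset d -> Prop) : Prop :=
  ~ exists f : nat -> vset d, forall Q, P Q -> exists n, vseteq (f n) Q.

(* Main.v *)
Require Import Defs.
From Stdlib Require Import Reals Lra Classical ClassicalEpsilon.
From mathcomp Require Import all_boot.
From HB Require Import structures.
From mathcomp Require classical_sets.
Set Implicit Arguments. Unset Strict Implicit.
Local Open Scope R_scope.

HB.instance Definition _ := Monoid.isComLaw.Build R 0 Rplus (fun x y z => esym (Rplus_assoc x y z)) Rplus_comm Rplus_0_l.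

Section S.
Variable d : nat.
Lemma rsum_add (f g : 'I_(d*d) -> R) : rsum (fun i => f i + g i) = rsum f + rsum g.
Proof. by rewrite /rsum big_split. Qed.
Lemma rsum_scal (a : R) (f : 'I_(d*d) -> R) : rsum (fun i => a * f i) = a * rsum f.
Proof.
rewrite /rsum. apply: (big_rec2 (fun x y => x = a * y)); first by ring.
by move=> i y1 y2 _ ->; ring.
Qed.
Lemma rsum_ext (f g : 'I_(d*d) -> R) : (forall i, f i = g i) -> rsum f = rsum g.
Proof. by move=> H; rewrite /rsum; apply: eq_bigr => i _. Qed.
Lemma rsum_ge0 (f : 'I_(d*d) -> R) : (forall i, 0 <= f i) -> 0 <= rsum f.
Proof.
move=> H; rewrite /rsum; apply: (big_ind (fun x => 0 <= x)); first lra.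
  by move=> x y; lra. by move=> i _; apply H.
Qed.
Lemma rsum_const (a : R) : rsum (fun _ : 'I_(d*d) => a) = INR (d*d) * a.
Proof.
rewrite /rsum big_const_ord. elim: (d*d)%nat => [|n IH] /=; first by ring.
rewrite IH; case: n {IH} => [|n] /=; ring.
Qed.
Lemma rsum_delta (k : 'I_(d*d)) (f : 'I_(d*d) -> R) :
  rsum (fun i => if k == i then f i else 0) = f k.
Proof.
rewrite /rsum (bigD1 k) //= eqxx big1 ?Rplus_0_r //.
by move=> i /negbTE; rewrite eq_sym => ->.
Qed.
Lemma rsum_lin a b (f g : 'I_(d*d) -> R) :
  rsum (fun i => a * f i + b * g i) = a * rsum f + b * rsum g.
Proof. by rewrite -!rsum_scal -rsum_add. Qed.
Lemma rsum_vsub (f g : vec d) : rsum (vsub f g) = rsum f - rsum g.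
Proof.
rewrite (@rsum_ext _ (fun i => 1 * f i + (-1) * g i)); first by rewrite rsum_lin; ring.
by move=> i; rewrite /vsub; ring.
Qed.
Lemma inner_ext (u u' v v' : vec d) : (forall i, u i = u' i) -> (forall i, v i = v' i) ->
  inner u v = inner u' v'.
Proof. by move=> H1 H2; apply: rsum_ext => i; rewrite H1 H2. Qed.
Lemma inner_sym (u v : vec d) : inner u v = inner v u.
Proof. by apply: rsum_ext => i; ring. Qed.
Lemma inner_lin a b (u v w : vec d) :
  inner (fun i => a * u i + b * v i) w = a * inner u w + b * inner v w.
Proof.
rewrite /inner (@rsum_ext _ (fun i => a * (u i * w i) + b * (v i * w i))).
  by rewrite rsum_add !rsum_scal.
by move=> i; ring.
Qed.
Lemma inner_ge0 (u : vec d) : 0 <= inner u u.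
Proof. by apply: rsum_ge0 => i; apply: Rle_0_sqr. Qed.
Lemma inner_quad (u w : vec d) a :
  inner (fun i => u i + a * w i) (fun i => u i + a * w i)
  = inner u u + 2 * a * inner u w + a ^ 2 * inner w w.
Proof.
rewrite /inner -!rsum_scal -!rsum_add; apply: rsum_ext => i; ring.
Qed.
Lemma inner_vsub (u v : vec d) :
  inner (vsub u v) (vsub u v) = inner u u - 2 * inner u v + inner v v.
Proof.
have -> : inner (vsub u v) (vsub u v) = inner (fun i => u i + (-1) * v i) (fun i => u i + (-1) * v i).
  by apply: inner_ext => i; rewrite /vsub; ring.
rewrite inner_quad; ring.
Qed.
Lemma inner_cen (x : vec d) : inner (@cen d) x = 1 / (INR d ^ 2) * rsum x.
Proof. by rewrite -rsum_scal; apply: rsum_ext => i; rewrite /cen. Qed.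
Lemma rsum_cen : (0 < d)%nat -> rsum (@cen d) = 1.
Proof.
move=> /ltP Hd; rewrite /cen rsum_const mult_INR.
have : 0 < INR d by apply: lt_0_INR.
move=> H; field; lra.
Qed.
End S.

Definition Hyp d (G : vset d) :=
  [/\ (2 <= d)%nat, vclosed G, vconvex G, germ G &
      vsubset (cl_conv (vunion (@Delta_e d) (@Bin d))) G].

Lemma Dge2 d : (2 <= d)%nat -> 2 <= INR d.
Proof. by move=> /leP H; apply: (le_INR 2). Qed.

Lemma inner_scal d a (u : vec d) :
  inner (fun i => a * u i) (fun i => a * u i) = a ^ 2 * inner u u.
Proof. by rewrite /inner -rsum_scal; apply: rsum_ext => i; ring. Qed.

Lemma H_inner_cen d (x : vec d) : (0 < d)%nat -> Hplane x -> inner (@cen d) x = 1 / INR d ^ 2.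
Proof. by move=> _ Hx; rewrite inner_cen Hx Rmult_1_r. Qed.

Lemma H_centered d (x : vec d) : (0 < d)%nat -> Hplane x ->
  inner (vsub x (@cen d)) (vsub x (@cen d)) = inner x x - 1 / INR d ^ 2.
Proof.
move=> Hd Hx; rewrite inner_vsub inner_sym H_inner_cen //.
rewrite H_inner_cen //; [ring | exact: rsum_cen].
Qed.

Lemma clconv_in d (X : vset d) u : X u -> cl_conv X u.
Proof. by move=> Xu S _ _ H; apply: H. Qed.

Section G.
End G.

Lemma G_H d G u : @Hyp d G -> G u -> Hplane u.
Proof. by case=> _ _ _ [H _] _ /H []. Qed.

Lemma cen_G d G : @Hyp d G -> G (@cen d).
Proof.
case=> Hd _ _ _ Hs; apply: Hs; apply: clconv_in; right; split.
  by apply: rsum_cen; apply: leq_trans Hd.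
rewrite /vnorm inner_vsub (_ : _ - _ + _ = 0); last by ring.
rewrite sqrt_0; exact: sqrt_pos.
Qed.

Lemma eb_G d G k : @Hyp d G -> G (@ebasis d k).
Proof.
case=> Hd _ _ _ Hs; apply: Hs; apply: clconv_in; left.
exists (fun j => if k == j then 1 else 0); split; [|split].
- by move=> j; case: (k == j); lra.
- exact: (@rsum_delta d k (fun _ => 1)).
- move=> i; rewrite -(@rsum_delta d k (fun j => ebasis j i)).
  by apply: rsum_ext => j; case: (k == j); ring.
Qed.

Lemma q_facts d : (2 <= d)%nat ->
  [/\ 0 < qconst d, qconst d < 1 / INR d ^ 2,
      1 / INR d ^ 2 - qconst d = 1 / (INR d ^ 2 * (INR d + 1)) &
      2 * qconst d - 1 / INR d ^ 2 = (INR d - 1) / (INR d ^ 2 * (INR d + 1))].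
Proof.
move=> /Dge2 HD.
have E3 : 1 / INR d ^ 2 - qconst d = 1 / (INR d ^ 2 * (INR d + 1)).
  rewrite /qconst; field; lra.
have P3 : 0 < 1 / (INR d ^ 2 * (INR d + 1)) by apply: Rdiv_lt_0_compat; nra.
split => //.
- rewrite /qconst; apply: Rdiv_lt_0_compat; nra.
- lra.
- rewrite /qconst; field; lra.
Qed.

Lemma P_Delta d G s : @Hyp d G -> polar G s -> Defs.Delta s.
Proof.
move=> HG [Hs Hp]; split => //.
case: (HG) => Hd _ _ _ _; have HD := Dge2 Hd.
move=> k; have := Hp _ (eb_G k HG).
have -> : inner s (ebasis k) = 1 / (INR d + 1) * s k + 1 / (INR d + 1) * (1 / INR d) * rsum s.
  rewrite -rsum_scal -(@rsum_delta d k (fun i => 1 / (INR d + 1) * s i)) -rsum_add.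
  by apply: rsum_ext => i; rewrite /ebasis; case: eqP => _; ring.
rewrite Hs /qconst => H.
have : 0 <= 1 / (INR d + 1) * s k.
  apply: (Rplus_le_reg_r (1 / (INR d + 1) * (1 / INR d) * 1)).
  rewrite Rplus_0_l; apply: Rle_trans H; right; field; lra.
move=> H2; have : s k = (INR d + 1) * (1 / (INR d + 1) * s k) by field; lra.
move=> ->; apply: Rmult_le_pos => //; lra.
Qed.

Lemma P_small d G s : @Hyp d G -> polar G s -> inner s s <= 2 * qconst d.
Proof.
move=> HG [Hs Hp]; case: (HG) => Hd _ _ _ Hsub.
have Hd0 : (0 < d)%nat by apply: leq_trans Hd.
have HD := Dge2 Hd; case: (q_facts Hd) => q0 q1 Ek ERo.
set k := 1 / INR d ^ 2 - qconst d in Ek.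
set Ro := 2 * qconst d - 1 / INR d ^ 2 in ERo.
apply: Rnot_lt_le => Hlt.
set D2 := inner s s - 1 / INR d ^ 2.
have Hk : 0 < k by rewrite Ek; apply: Rdiv_lt_0_compat; nra.
have HRo : 0 < Ro by rewrite ERo; apply: Rdiv_lt_0_compat; nra.
have HD2 : Ro < D2 by rewrite /Ro /D2; lra.
set t := 2 * k / (D2 + Ro).
set b : vec d := fun i => 1 * @cen d i + (- t) * vsub s (@cen d) i.
have Hb : Hplane b.
  by rewrite /Hplane /b rsum_lin rsum_vsub Hs (rsum_cen Hd0); ring.
have Gb : G b.
  apply: Hsub; apply: clconv_in; right; split => //.
  rewrite /vnorm (@inner_ext _ _ (fun i => (-t) * vsub s (@cen d) i) _ (fun i => (-t) * vsub s (@cen d) i)); 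
    try by move=> i; rewrite /b /vsub; ring.
  rewrite inner_scal H_centered // -/D2 /r_in; apply: sqrt_le_1_alt.
  have Eri : 1 / (INR d ^ 2 * (INR d ^ 2 - 1)) = k ^ 2 / Ro.
    rewrite Ek ERo; field; split; nra.
  rewrite Eri.
  apply: Rminus_le.
  have -> : (- t) ^ 2 * D2 - k ^ 2 / Ro = - (k ^ 2 * (D2 - Ro) ^ 2 / ((D2 + Ro) ^ 2 * Ro)).
    rewrite /t; field; lra.
  apply: Rge_le; apply: Ropp_0_le_ge_contravar; apply: Rmult_le_pos; first by apply: Rmult_le_pos; apply: pow2_ge_0.
  apply: Rlt_le; apply: Rinv_0_lt_compat; apply: Rmult_lt_0_compat => //; apply: pow_lt; lra.
have := Hp _ Gb.
have -> : inner s b = 1 * inner (@cen d) s + (- t) * inner (vsub s (@cen d)) s.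
  by rewrite inner_sym /b inner_lin.
rewrite (H_inner_cen Hd0 Hs).
have -> : inner (vsub s (@cen d)) s = inner s s - 1 / INR d ^ 2.
  rewrite (@inner_ext _ _ (fun i => 1 * s i + (-1) * @cen d i) s s); last by [].
    by rewrite inner_lin (H_inner_cen Hd0 Hs); ring.
  by move=> i; rewrite /vsub; ring.
rewrite -/D2 => H.
have : t * D2 <= k by rewrite /k; lra.
apply: Rlt_not_le; rewrite /t.
have -> : 2 * k / (D2 + Ro) * D2 = k + k * (D2 - Ro) / (D2 + Ro) by field; lra.
have : 0 < k * (D2 - Ro) / (D2 + Ro).
  apply: Rdiv_lt_0_compat; nra.
lra.
Qed.

Lemma G_P d G u : @Hyp d G -> G u -> polar G u.
Proof.
move=> HG Gu; split; first exact: G_H HG Gu.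
by case: HG => _ _ _ [_ Hg] _ v Gv; case: (Hg _ _ Gu Gv).
Qed.

Lemma polar_convex d (A : vset d) : vconvex (polar A).
Proof.
move=> u v t [Hu Pu] [Hv Pv] Ht; split.
  by rewrite /Hplane rsum_lin Hu Hv; ring.
move=> w Aw; rewrite inner_lin; have := Pu _ Aw; have := Pv _ Aw; nra.
Qed.

Lemma cen_P d G : @Hyp d G -> polar G (@cen d).
Proof.
move=> HG; case: (HG) => Hd _ _ _ _; have Hd0 : (0 < d)%nat by apply: leq_trans Hd.
split; first exact: rsum_cen.
move=> v Gv; rewrite H_inner_cen //; last exact: G_H HG Gv.
by case: (q_facts Hd) => _ ? _ _; lra.
Qed.

Lemma H_self d (s : vec d) : (2 <= d)%nat -> Hplane s -> qconst d <= inner s s.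
Proof.
move=> Hd Hs; have Hd0 : (0 < d)%nat by apply: leq_trans Hd.
have := H_centered Hd0 Hs; have := inner_ge0 (vsub s (@cen d)).
by case: (q_facts Hd) => _ ? _ _; lra.
Qed.

Lemma inner_avg d (x y : vec d) : inner x y <= (inner x x + inner y y) / 2.
Proof. have := inner_ge0 (vsub x y); rewrite inner_vsub; lra. Qed.

Lemma germ_char d G (K : vset d) : @Hyp d G ->
  (forall u, K u -> polar G u) ->
  (forall x y, K x -> K y -> qconst d <= inner x y) -> germ K.
Proof.
move=> HG KP Kq; split; first by move=> u /KP /(P_Delta HG).
move=> p s Kp Ks; split; first exact: Kq.
have := P_small HG (KP _ Kp); have := P_small HG (KP _ Ks); have := inner_avg p s; lra.
Qed.

Lemma bout_of d (x : vec d) : (2 <= d)%nat -> Hplane x -> inner x x <= 2 * qconst d -> Bout x.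
Proof.
move=> Hd Hx Hxx; split => //; have Hd0 : (0 < d)%nat by apply: leq_trans Hd.
rewrite /vnorm H_centered // /r_out; apply: sqrt_le_1_alt.
by case: (q_facts Hd) => _ _ _ E; lra.
Qed.

Lemma maximal_qplex d G (Q : vset d) : @Hyp d G -> germ Q -> vsubset G Q ->
  (forall s, germ (fun u => Q u \/ u = s) -> Q s) -> qplex Q.
Proof.
move=> HG [QD Qg] GQ Qmax; case: (HG) => Hd _ _ _ _.
have QH u : Q u -> Hplane u by move=> /QD [].
have QP u : Q u -> polar G u.
  move=> Qu; split; [exact: QH | by move=> v /GQ Qv; case: (Qg _ _ Qu Qv)].
split.
  move=> u Qu; split; first exact: QD.
  by apply: bout_of => //; [exact: QH | case: (Qg _ _ Qu Qu)].
move=> s; split; last first.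
  by move=> Qs; split; [exact: QH | move=> v Qv; case: (Qg _ _ Qs Qv)].
move=> [Hs Ps]; apply: Qmax; apply: (germ_char HG).
  move=> u [/QP //| ->]; split => // v /GQ; exact: Ps.
move=> x y [Qx|->] [Qy|->].
- by case: (Qg _ _ Qx Qy).
- by rewrite inner_sym; apply: Ps.
- by apply: Ps.
- exact: H_self.
Qed.

Lemma germ_sub d (A B : vset d) : germ B -> vsubset A B -> germ A.
Proof.
move=> [BD Bg] AB; split; first by move=> u /AB /BD.
by move=> p s /AB Bp /AB Bs; apply: Bg.
Qed.

Lemma zorn_germ d (K : vset d) : germ K ->
  exists Q, germ Q /\ vsubset K Q /\
    (forall s, germ (fun u => Q u \/ u = s) -> Q s).
Proof.
move=> gK.
have := @classical_sets.Zorn_bigcup (vec d)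
  (fun A => germ (fun u => A u \/ K u)).
case; last move=> A [PA Amax].
  move=> F FP Ftot.
  have [gD gq] := gK.
  split.
    move=> u [[X FX Xu]|Ku]; last exact: gD.
    by have [XD _] := FP X FX; apply: XD; left.
  move=> p s [[X FX Xp]|Kp] [[Y FY Ys]|Ks].
  - have [XY|YX] := Ftot X Y FX FY.
      by have [_ Yg] := FP Y FY; apply: Yg; left; [apply: XY | ].
    by have [_ Xg] := FP X FX; apply: Xg; left; [ | apply: YX].
  - by have [_ Xg] := FP X FX; apply: Xg; [left | right].
  - by have [_ Yg] := FP Y FY; apply: Yg; [right | left].
  - exact: gq.
exists (fun u => A u \/ K u); split => //; split; first by move=> u Ku; right.
move=> s gs; case: (classic (A s)) => [As|nAs]; first by left.
exfalso; apply: (Amax (fun u => A u \/ u = s)).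
  split; first by move=> u Au; left.
  by move=> H; apply: nAs; apply: H; right.
change (germ (fun u => (A u \/ u = s) \/ K u)); apply: (germ_sub gs) => u [[Au|->]|Ku]; by [left; left | right | left; right].
Qed.

Lemma separation d G (y : vec d) : @Hyp d G -> Hplane y -> ~ G y ->
  exists z, polar G z /\ inner z y < qconst d.
Proof.
move=> HG Hy nGy; case: (HG) => Hd Hcl Hcv [GD Ggm] Hsub.
have Hd0 : (0 < d)%nat by apply: leq_trans Hd.
case: (q_facts Hd) => q0 q1 Ek _.
set q := qconst d in q0 q1 Ek *.
set k := 1 / INR d ^ 2 - q in Ek.
have Ekd : k = 1 / INR d ^ 2 - q by [].
clearbody k.
have Hk : 0 < k by rewrite Ek; have := Dge2 Hd => HD; apply: Rdiv_lt_0_compat; nra.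
set dist := fun v : vec d => inner (vsub y v) (vsub y v).
have [eps [Heps Hfar]] : exists eps, 0 < eps /\ forall v, G v -> eps ^ 2 <= dist v.
  apply: NNPP => H; apply: nGy; apply: Hcl => eps Heps.
  apply: NNPP => H2; apply: H; exists eps; split => // v Gv.
  have Hn : eps <= vnorm (vsub y v).
    apply: Rnot_lt_le => Hlt; apply: H2; exists v; split => //.
  have Hs : dist v = vnorm (vsub y v) ^ 2.
    by rewrite /vnorm /= Rmult_1_r sqrt_sqrt //; apply: inner_ge0.
  rewrite Hs; apply: pow_incr; lra.
set E := fun r => exists v, G v /\ r = - dist v.
have [m [Hub Hlub]] : {m | is_lub E m}.
  apply: completeness.
    by exists 0 => r [v [_ ->]]; have := inner_ge0 (vsub y v); rewrite /dist; lra.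
  by exists (- dist (@cen d)); exists (@cen d); split => //; exact: cen_G HG.
set delta := - m.
have FA v : G v -> delta <= dist v.
  by move=> Gv; have := Hub (- dist v) (ex_intro _ v (conj Gv erefl)); rewrite /delta; lra.
have FB : eps ^ 2 <= delta.
  have : m <= - eps ^ 2.
    by apply: Hlub => r [v [Gv ->]]; have := Hfar v Gv; lra.
  rewrite /delta; lra.
have Hdel : 0 < delta by have := pow_lt _ 2 Heps; lra.
have FC eta : 0 < eta -> exists v, G v /\ dist v < delta + eta.
  move=> Heta; apply: NNPP => H.
  have : m <= - (delta + eta).
    apply: Hlub => r [v [Gv ->]]; apply: Ropp_le_contravar.
    apply: Rnot_lt_le => Hlt; apply: H; exists v; split => //.
  rewrite /delta; lra.
set t := delta / (delta + 4 * q).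
have Ht0 : 0 < t by apply: Rdiv_lt_0_compat; lra.
have Ht1 : t <= 1.
  rewrite /t; apply: (Rmult_le_reg_r (delta + 4 * q)); first lra.
  rewrite /Rdiv Rmult_assoc Rinv_l; lra.
have Htq : 2 * q * t <= delta / 2.
  have -> : 2 * q * t = delta / 2 - delta * delta / (2 * (delta + 4 * q)) by rewrite /t; field; lra.
  have : 0 <= delta * delta / (2 * (delta + 4 * q)).
    apply: Rmult_le_pos; [nra | apply: Rlt_le; apply: Rinv_0_lt_compat; lra].
  lra.
have [g0 [Gg0 Hg0]] := FC (t * delta / 2) ltac:(nra).
set v := vsub y g0.
have Hy0 : Hplane g0 by have [] := GD _ Gg0.
have Claim g : G g -> inner (vsub g g0) v < delta / 2.
  move=> Gg; set w := vsub g g0.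
  have Ggt : G (fun i => t * g i + (1 - t) * g0 i) by apply: Hcv => //; lra.
  have := FA _ Ggt.
  have -> : dist (fun i => t * g i + (1 - t) * g0 i) = inner (fun i => v i + (- t) * w i) (fun i => v i + (- t) * w i).
    by apply: inner_ext => i; rewrite /v /w /vsub; ring.
  rewrite inner_quad.
  have Hww : inner w w <= 2 * q.
    rewrite /w inner_vsub; have [? ?] := Ggm _ _ Gg Gg; have [? ?] := Ggm _ _ Gg0 Gg0.
    have [? ?] := Ggm _ _ Gg Gg0; rewrite /q; lra.
  have Hw0 := inner_ge0 w.
  have Hv : inner v v < delta + t * delta / 2 by [].
  rewrite (inner_sym v w) => H.
  have : 2 * t * inner w v < t * delta.
    have : (- t) ^ 2 * inner w w <= t * (delta / 2).
      have -> : (- t) ^ 2 * inner w w = t * (t * inner w w) by ring.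
      apply: Rmult_le_compat_l; first lra.
      apply: Rle_trans (_ : t * (2 * q) <= _); first by apply: Rmult_le_compat_l; lra.
      lra.
    lra.
  move=> H2; apply: (Rmult_lt_reg_l (2 * t)); first lra.
  lra.
set m' := inner y v.
have Hm' : m' = inner g0 v + inner v v.
  rewrite /m' (@inner_ext _ y (fun i => 1 * g0 i + 1 * v i) v v).
    by rewrite inner_lin; ring.
  by move=> i; rewrite /v /vsub; ring.
  by [].
have Hvv : delta <= inner v v by apply: FA.
have Hsplit g : inner g v = inner g0 v + inner (vsub g g0) v.
  rewrite (@inner_ext _ (vsub g g0) (fun i => 1 * g i + (-1) * g0 i) v v).
    by rewrite inner_lin; ring.
  by move=> i; rewrite /vsub; ring.
  by [].
have Hbound g : G g -> inner g v < m' - delta / 2.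
  by move=> Gg; rewrite Hsplit; have := Claim g Gg; lra.
have Hv0 : rsum v = 0 by rewrite /v rsum_vsub Hy Hy0; ring.
have Hcv0 : inner (@cen d) v = 0 by rewrite inner_cen Hv0; ring.
have Hmpos : 0 < m' - delta / 2 by rewrite -Hcv0; apply: Hbound; exact: cen_G HG.
set beta := k / (m' - delta / 4).
have Hbeta : 0 < beta by apply: Rdiv_lt_0_compat; lra.
set z : vec d := fun i => 1 * @cen d i + (- beta) * v i.
have Hzin x : Hplane x -> inner z x = 1 / INR d ^ 2 - beta * inner x v.
  move=> Hx; rewrite /z inner_lin (H_inner_cen Hd0 Hx) (inner_sym v x); ring.
exists z; split.
  split; first by rewrite /Hplane /z rsum_lin (rsum_cen Hd0) Hv0; ring.
  move=> g Gg; rewrite (Hzin _ (G_H HG Gg)).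
  have := Hbound g Gg => Hb.
  have : beta * inner g v < k.
    apply: Rle_lt_trans (_ : beta * (m' - delta / 2) < k).
      apply: Rmult_le_compat_l; lra.
    rewrite /beta; apply: (Rmult_lt_reg_r (m' - delta / 4)); first lra.
    have -> : k / (m' - delta / 4) * (m' - delta / 2) * (m' - delta / 4) = k * (m' - delta / 2) by field; lra.
    nra.
  rewrite -/q; lra.
rewrite (Hzin _ Hy) -/m'.
have : k < beta * m'.
  rewrite /beta; apply: (Rmult_lt_reg_r (m' - delta / 4)); first lra.
  have -> : k / (m' - delta / 4) * m' * (m' - delta / 4) = k * m' by field; lra.
  nra.
lra.
Qed.

Section Unc.
Definition ustep (g : nat -> R) (n : nat) (p : R * R) : R * R :=
  let l := fst p in let u := snd p in
  if Rlt_dec (g n) ((l + u) / 2) then (l + 2 * (u - l) / 3, u) else (l, l + (u - l) / 3).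
Fixpoint uiv (g : nat -> R) (a b : R) (n : nat) : R * R :=
  match n with O => (a, b) | S n => ustep g n (uiv g a b n) end.

Lemma uiv_props g a b n : a < b ->
  [/\ fst (uiv g a b n) < snd (uiv g a b n),
      fst (uiv g a b n) <= fst (uiv g a b (S n)),
      snd (uiv g a b (S n)) <= snd (uiv g a b n) &
      g n < fst (uiv g a b (S n)) \/ snd (uiv g a b (S n)) < g n].
Proof.
move=> Hab; elim: n => [|n [IH1 _ _ _]].
  rewrite /= /ustep /=; case: Rlt_dec => /= H; split; lra.
have Hlt : fst (uiv g a b n.+1) < snd (uiv g a b n.+1).
  rewrite /= /ustep; case: Rlt_dec => /= H; lra.
have E : uiv g a b n.+2 = ustep g n.+1 (uiv g a b n.+1) by [].
rewrite E; move: Hlt; case: (uiv g a b n.+1) => l u /= Hlt.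
by rewrite /ustep /=; case: Rlt_dec => /= H; split; lra.
Qed.

Lemma uiv_mono g a b n k : a < b ->
  fst (uiv g a b n) <= fst (uiv g a b (n + k)) /\ snd (uiv g a b (n + k)) <= snd (uiv g a b n).
Proof.
move=> Hab; elim: k => [|k [IH1 IH2]]; first by rewrite addn0; lra.
rewrite addnS; have [_ H2 H3 _] := uiv_props g (n + k) Hab; lra.
Qed.

Lemma uiv_cross g a b n m : a < b -> fst (uiv g a b n) <= snd (uiv g a b m).
Proof.
move=> Hab; have [H1 _] := uiv_mono g n m Hab.
have [_ H2] := uiv_mono g m n Hab.
have [H3 _ _ _] := uiv_props g (n + m) Hab.
rewrite addnC in H2; lra.
Qed.

Lemma uncount (a b : R) (g : nat -> R) : a < b ->
  exists x, a <= x <= b /\ forall n, g n <> x.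
Proof.
move=> Hab.
have [x [Hub Hlub]] : {x | is_lub (fun r => exists n, r = fst (uiv g a b n)) x}.
  apply: completeness.
    by exists b => r [n ->]; apply: (uiv_cross g n 0 Hab).
  by exists a, 0%nat.
have Hl n : fst (uiv g a b n) <= x by apply: Hub; exists n.
have Hu n : x <= snd (uiv g a b n) by apply: Hlub => r [k ->]; apply: uiv_cross.
exists x; split; first by split; [apply: (Hl 0%nat) | apply: (Hu 0%nat)].
move=> n Hn; have [_ _ _ [H|H]] := uiv_props g n Hab.
  by have := Hl n.+1; lra.
by have := Hu n.+1; lra.
Qed.
End Unc.

Theorem mainTheorem5 (d : nat) (G : vset d) :
  (2 <= d)%nat ->
  @vclosed d G -> @vconvex d G -> @germ d G ->
  @vsubset d (@cl_conv d (@vunion d (@Delta_e d) (@Bin d))) G ->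
  ~ @qplex d G ->
  @uncountably_many d (fun Q => @qplex d Q /\ @vsubset d G Q).
Proof.
move=> Hd Hcl Hcv Hg Hsub nq.
have HG : Hyp G by split.
have Hd0 : (0 < d)%nat by apply: leq_trans Hd.
case: (q_facts Hd) => q0 q1 Ek _.
set k := 1 / INR d ^ 2 - qconst d in Ek.
have Ekd : k = 1 / INR d ^ 2 - qconst d by [].
clearbody k.
have Hk : 0 < k by rewrite Ek; have := Dge2 Hd => HD; apply: Rdiv_lt_0_compat; nra.
have [p [Pp nGp]] : exists p, polar G p /\ ~ G p.
  apply: NNPP => H; apply: nq; split.
    move=> u Gu; case: (Hg) => GD Gq; split; first exact: GD.
    apply: bout_of => //; first exact: G_H HG Gu.
    by case: (Gq _ _ Gu Gu).
  move=> u; split; last exact: G_P.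
  by move=> Pu; apply: NNPP => nGu; apply: H; exists u.
have Hp : Hplane p by case: Pp.
have [z0 [Pz0 Hz0p]] := separation HG Hp nGp.
have Hz0 : Hplane z0 by case: Pz0.
set A := 1 / INR d ^ 2 - inner z0 p.
have HA : k < A by rewrite /A; lra.
set l0 := k / A.
have El0 : l0 = k / A by [].
clearbody l0.
have Hl0 : 0 < l0 by rewrite El0; apply: Rdiv_lt_0_compat; lra.
have Hl01 : l0 < 1.
  rewrite El0; apply: (Rmult_lt_reg_r A); first lra.
  rewrite /Rdiv Rmult_assoc Rinv_l; lra.
set pl := fun (l : R) (i : 'I_(d * d)) => l * p i + (1 - l) * @cen d i.
set zl := fun (l : R) (i : 'I_(d * d)) => (k / (l * A)) * z0 i + (1 - k / (l * A)) * @cen d i.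
have Hcen := cen_P HG.
have Hpl l : Hplane (pl l).
  by rewrite /Hplane /pl rsum_lin Hp (rsum_cen Hd0); ring.
have Einner l m : 0 < l -> inner (zl l) (pl m) = 1 / INR d ^ 2 - k / (l * A) * m * A.
  move=> Hl; rewrite /zl inner_lin (H_inner_cen Hd0 (Hpl m)) inner_sym /pl inner_lin.
  rewrite (H_inner_cen Hd0 Hz0) (inner_sym p z0) /A; ring.
have Ppl l : l0 <= l <= 1 -> polar G (pl l).
  by move=> Hl; apply: polar_convex => //; lra.
have Pzl l : l0 <= l <= 1 -> polar G (zl l).
  move=> Hl; apply: polar_convex => //.
  have H1 : 0 < k / (l * A) by apply: Rdiv_lt_0_compat; nra.
  split; first lra.
  apply: (Rmult_le_reg_r (l * A)); first nra.
  rewrite /Rdiv Rmult_assoc Rinv_l; last by apply: Rgt_not_eq; nra.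
  have : k / A * A <= l * A by apply: Rmult_le_compat_r; lra.
  rewrite /Rdiv Rmult_assoc Rinv_l; lra.
have Excl l m (Q : vset d) : l0 <= l <= 1 -> l < m -> germ Q -> Q (zl l) -> ~ Q (pl m).
  move=> Hl Hlm [_ Qg] Qz Qp; have [H _] := Qg _ _ Qz Qp.
  rewrite Einner in H; last lra.
  have : k < k / (l * A) * m * A.
    have -> : k / (l * A) * m * A = k * (m / l) by field; split; apply: Rgt_not_eq; lra.
    have : 1 < m / l.
      apply: (Rmult_lt_reg_r l); first lra.
      rewrite /Rdiv Rmult_assoc Rinv_l; lra.
    nra.
  lra.
have Ex l : l0 <= l <= 1 -> exists Q, (qplex Q /\ vsubset G Q) /\ germ Q /\ Q (pl l) /\ Q (zl l).
  move=> Hl.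
  have gK : germ (fun u => G u \/ u = pl l \/ u = zl l).
    apply: (germ_char HG).
      by move=> u [/(G_P HG) //|[->|->]]; [apply: Ppl | apply: Pzl].
    have Hself u : polar G u -> qconst d <= inner u u by move=> [Hu _]; apply: H_self.
    move=> x y [Gx|[->|->]] [Gy|[->|->]].
    + by case: Hg => _ /(_ _ _ Gx Gy) [].
    + by case: (Ppl l Hl) => _ /(_ _ Gx); rewrite inner_sym.
    + by case: (Pzl l Hl) => _ /(_ _ Gx); rewrite inner_sym.
    + by case: (Ppl l Hl) => _ /(_ _ Gy).
    + exact: Hself (Ppl l Hl).
    + rewrite inner_sym Einner; last lra.
      have -> : k / (l * A) * l * A = k by field; split; apply: Rgt_not_eq; lra.
      lra.
    + by case: (Pzl l Hl) => _ /(_ _ Gy).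
    + rewrite Einner; last lra.
      have -> : k / (l * A) * l * A = k by field; split; apply: Rgt_not_eq; lra.
      lra.
    + exact: Hself (Pzl l Hl).
  have [Q [gQ [KQ Qmax]]] := zorn_germ gK.
  have GQ : vsubset G Q by move=> u Gu; apply: KQ; left.
  exists Q; split; first by split => //; apply: (maximal_qplex HG gQ GQ).
  split => //; split; apply: KQ; right; [left | right] => //.
move=> [f Hf].
set Rel := fun l n => exists Q, germ Q /\ Q (pl l) /\ Q (zl l) /\ vseteq (f n) Q.
have Runiq l m n : l0 <= l <= 1 -> l0 <= m <= 1 -> Rel l n -> Rel m n -> l = m.
  move=> Hl Hm [Q1 [g1 [p1 [z1 e1]]]] [Q2 [g2 [p2 [z2 e2]]]].
  case: (Rtotal_order l m) => [Hlm|[//|Hml]].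
    by exfalso; apply: (Excl l m Q1 Hl Hlm g1 z1); apply/e1/e2.
  by exfalso; apply: (Excl m l Q2 Hm Hml g2 z2); apply/e2/e1.
set gs := fun n => epsilon (inhabits 0) (fun l => (l0 <= l <= 1) /\ Rel l n).
have [x [Hx Hxn]] := uncount gs Hl01.
have [Q [[qQ gsQ] [gQ [pQ zQ]]]] := Ex x Hx.
have [n Hn] := Hf Q (conj qQ gsQ).
have Hrel : Rel x n by exists Q; split; [|split; [|split]].
have [Hgn Rgn] : (l0 <= gs n <= 1) /\ Rel (gs n) n.
  exact: (epsilon_spec (inhabits 0) (fun l => (l0 <= l <= 1) /\ Rel l n) (ex_intro _ x (conj Hx Hrel))).
by apply: (Hxn n); apply: Runiq Hgn Hx Rgn Hrel.
Qed.
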